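(* Let $G$ be a group which is an internal semidirect product $G = HK$, where $H$ is a normal subgroup of $G$, $K$ is a subgroup of $G$ with $H\cap K=1$. Let $\hat{\mathcal{M}}_K$ be the set of all formal matrices $\begin{pmatrix}\alpha & 0\\ \gamma & \delta\end{pmatrix}$ with $\alpha\in \mathrm{Map}(H,H)$, $\gamma\in \mathrm{Hom}(H,K)$, $\delta\in \mathrm{Aut}(K)$ satisfying: (C1) $\alpha(hh') = \alpha(h)\,\alpha(h')^{\gamma(h)}$ for all $h,h'\in H$; (C2) $\gamma(h^{k}) = \gamma(h)^{\delta(k)}$ for all $h\in H$, $k\in K$; (C3) $\alpha(h^{k}) = \alpha(h)^{\delta(k)}$ for all $h\in H$, $k\in K$; (C4) for every $h'k'\in G$ ($h'\in H$, $k'\in K$) there is a unique $hk\in G$ ($h\in H,k\in K$) with $\alpha(h)=h'$ and $\gamma(h)\delta(k)=k'$. Equip $\hat{\mathcal{M}}_K$ with the multiplication $\begin{pmatrix}\alpha & 0\\ \gamma & \delta\end{pmatrix}\begin{pmatrix}\alpha' & 0\\ \gamma' & \delta'\end{pmatrix}=\begin{pmatrix}\alpha\alpha' & 0\\ \gamma\alpha'+\delta\gamma' & \delta\delta'\end{pmatrix}$, where $\alpha\alpha'$, $\delta\delta'$ are compositions and $(\gamma\alpha'+\delta\gamma')(h)=\gamma(\alpha'(h))\,\delta(\gamma'(h))$. Then $\hat{\mathcal{M}}_K$ is a group and the group $\mathrm{Aut}_K(G)$ is isomorphic to $\hat{\mathcal{M}}_K$ (via $\theta\mapsto \begin{pmatrix}\alpha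 & 0\\ \gamma & \delta\end{pmatrix}$ where $\theta(h)=\alpha(h)\gamma(h)$ for $h\in H$ and $\delta=\theta|_K$).
   Context: For a group $G$ and $x,y\in G$, $x^{y}$ denotes the conjugate $yxy^{-1}$. For a subgroup $K$ of $G$, $\mathrm{Aut}_K(G)=\{\theta\in\mathrm{Aut}(G)\mid \theta(K)=K\}$. $\mathrm{Map}(H,H)$ denotes the set of all maps $H\to H$. *)

(* Defs.v *)
Set Implicit Arguments.
Unset Strict Implicit.

Record Group := {
  gcar :> Type;
  gmul : gcar -> gcar -> gcar;
  gone : gcar;
  ginv : gcar -> gcar;
  gmulA : forall x y z, gmul x (gmul y z) = gmul (gmul x y) z;
  gmul1l : forall x, gmul gone x = x;
  gmul1r : forall x, gmul x gone = x;
  gmulVl : forall x, gmul (ginv x) x = gone;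
  gmulVr : forall x, gmul x (ginv x) = gone }.

Arguments gmul {g} _ _.
Arguments gone {g}.
Arguments ginv {g} _.

(* x^y := y x y^{-1} *)
Definition gconj (G : Group) (x y : G) : G := gmul y (gmul x (ginv y)).

Record subgroup (G : Group) := {
  smem : G -> Prop;
  smem1 : smem gone;
  smemM : forall x y, smem x -> smem y -> smem (gmul x y);
  smemV : forall x, smem x -> smem (ginv x) }.

Definition elt (G : Group) (S : subgroup G) := {x : G | smem S x}.

Definition smul (G : Group) (S : subgroup G) (a b : elt S) : elt S :=
  exist _ (gmul (proj1_sig a) (proj1_sig b))
        (smemM (proj2_sig a) (proj2_sig b)).

Definition normal (G : Group) (H : subgroup G) : Prop :=
  forall h g : G, smem H h -> smem H (gconj h g).

Definition semidirect (G : Group) (H K : subgroup G) : Prop :=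
  normal H /\
  (forall g : G, exists h k : G, smem H h /\ smem K k /\ g = gmul h k) /\
  (forall x : G, smem H x -> smem K x -> x = gone).

Definition bijective {A B : Type} (f : A -> B) : Prop :=
  (forall x y, f x = f y -> x = y) /\ (forall y, exists x, f x = y).

Definition AutK (G : Group) (K : subgroup G) (theta : G -> G) : Prop :=
  (forall x y : G, theta (gmul x y) = gmul (theta x) (theta y)) /\
  bijective theta /\
  (forall x, smem K x -> smem K (theta x)) /\
  (forall y, smem K y -> exists x, smem K x /\ theta x = y).

Record mat (G : Group) (H K : subgroup G) := Mat {
  ma : elt H -> elt H;
  mg : elt H -> elt K;
  md : elt K -> elt K }.

Arguments Mat {G H K} _ _ _.

Definition inMK (G : Group) (H K : subgroup G) (m : mat H K) : Prop :=
  (forall a b : elt H, mg m (smul a b) = smul (mg m a) (mg m b)) /\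
  (forall a b : elt K, md m (smul a b) = smul (md m a) (md m b)) /\
  bijective (md m) /\
  (forall h h' : elt H,
     proj1_sig (ma m (smul h h')) =
     gmul (proj1_sig (ma m h))
          (gconj (proj1_sig (ma m h')) (proj1_sig (mg m h)))) /\
  (forall (h : elt H) (k : elt K) (hk : elt H),
     proj1_sig hk = gconj (proj1_sig h) (proj1_sig k) ->
     proj1_sig (mg m hk) = gconj (proj1_sig (mg m h)) (proj1_sig (md m k))) /\
  (forall (h : elt H) (k : elt K) (hk : elt H),
     proj1_sig hk = gconj (proj1_sig h) (proj1_sig k) ->
     proj1_sig (ma m hk) = gconj (proj1_sig (ma m h)) (proj1_sig (md m k))) /\
  (forall (h' : elt H) (k' : elt K),
     exists! p : elt H * elt K,
       ma m (fst p) = h' /\ smul (mg m (fst p)) (md m (snd p)) = k').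

Definition mmul (G : Group) (H K : subgroup G) (m m' : mat H K) : mat H K :=
  Mat (fun h => ma m (ma m' h))
      (fun h => smul (mg m (ma m' h)) (md m (mg m' h)))
      (fun k => md m (md m' k)).

(* Main.v *)
Require Import Defs.
From Stdlib Require Import ClassicalEpsilon FunctionalExtensionality ProofIrrelevance.

Local Notation "x ** y" := (gmul x y) (at level 40, left associativity).

Lemma mulA' {G:Group} (x y z : G) : x ** y ** z = x ** (y ** z).
Proof. symmetry; apply gmulA. Qed.
Lemma mulKV {G:Group} (x y : G) : x ** (ginv x ** y) = y.
Proof. rewrite gmulA, gmulVr, gmul1l; reflexivity. Qed.
Lemma mulVK {G:Group} (x y : G) : ginv x ** (x ** y) = y.
Proof. rewrite gmulA, gmulVl, gmul1l; reflexivity. Qed.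
Lemma mul_cancel_l {G:Group} (a b c : G) : a ** b = a ** c -> b = c.
Proof. intro E. rewrite <- (mulVK a b), <- (mulVK a c), E. reflexivity. Qed.
Lemma mul_cancel_r {G:Group} (a b c : G) : b ** a = c ** a -> b = c.
Proof. intro E. assert (E2: b ** a ** ginv a = c ** a ** ginv a) by (rewrite E; reflexivity).
  rewrite !mulA', gmulVr, !gmul1r in E2. exact E2. Qed.
Lemma inv_unique {G:Group} (a b : G) : a ** b = gone -> b = ginv a.
Proof. intro E. apply (mul_cancel_l a). rewrite E, gmulVr. reflexivity. Qed.
Lemma inv_mul {G:Group} (a b : G) : ginv (a ** b) = ginv b ** ginv a.
Proof. symmetry. apply inv_unique. rewrite mulA', mulKV, gmulVr. reflexivity. Qed.
Lemma inv_inv {G:Group} (a : G) : ginv (ginv a) = a.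
Proof. symmetry. apply inv_unique. apply gmulVl. Qed.
Lemma inv_one {G:Group} : ginv (gone : G) = gone.
Proof. symmetry. apply inv_unique. apply gmul1l. Qed.

Ltac gsimpl := unfold gconj in *; repeat (rewrite mulA' || rewrite mulKV || rewrite mulVK || rewrite gmulVl || rewrite gmulVr || rewrite gmul1l || rewrite gmul1r || rewrite inv_mul || rewrite inv_inv || rewrite inv_one).

Lemma elt_eq {G : Group} {S : subgroup G} (a b : elt S) : proj1_sig a = proj1_sig b -> a = b.
Proof. destruct a as [x px], b as [y py]; simpl; intros E; subst. f_equal. apply proof_irrelevance. Qed.

Lemma dec_uniq {G : Group} {H K : subgroup G} (hSD : semidirect H K) {h1 k1 h2 k2 : G} :
  smem H h1 -> smem K k1 -> smem H h2 -> smem K k2 -> h1 ** k1 = h2 ** k2 -> h1 = h2 /\ k1 = k2.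
Proof.
  destruct hSD as [_ [_ Hint]]. intros a b c d E.
  assert (E2: ginv h2 ** h1 = k2 ** ginv k1).
  { apply (mul_cancel_l h2). apply (mul_cancel_r k1). gsimpl. exact E. }
  assert (E3: ginv h2 ** h1 = gone).
  { apply Hint. apply smemM; auto. apply smemV; auto. rewrite E2. apply smemM; auto. apply smemV; auto. }
  split.
  - apply (mul_cancel_l (ginv h2)). rewrite E3, gmulVl. reflexivity.
  - rewrite E3 in E2. apply (mul_cancel_r (ginv k1)). rewrite <- E2, gmulVr. reflexivity.
Qed.

Lemma dec_ex {G : Group} {H K : subgroup G} (hSD : semidirect H K) (g : G) :
  exists p : elt H * elt K, g = proj1_sig (fst p) ** proj1_sig (snd p).
Proof. destruct hSD as [_ [D _]]. destruct (D g) as [h [k [hh [kk E]]]].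
  exists (exist _ h hh, exist _ k kk). exact E. Qed.

Definition dec {G : Group} {H K : subgroup G} (hSD : semidirect H K) (g : G) : elt H * elt K :=
  proj1_sig (constructive_indefinite_description _ (dec_ex hSD g)).
Definition hp {G : Group} {H K : subgroup G} (hSD : semidirect H K) (g : G) : elt H := fst (dec hSD g).
Definition kp {G : Group} {H K : subgroup G} (hSD : semidirect H K) (g : G) : elt K := snd (dec hSD g).

Lemma hp_kp {G : Group} {H K : subgroup G} (hSD : semidirect H K) (g : G) :
  g = proj1_sig (hp hSD g) ** proj1_sig (kp hSD g).
Proof. unfold hp, kp, dec. destruct (constructive_indefinite_description _ _). simpl. exact e. Qed.

Lemma dec_eq {G : Group} {H K : subgroup G} (hSD : semidirect H K) (a : elt H) (b : elt K) (g : G) :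
  g = proj1_sig a ** proj1_sig b -> hp hSD g = a /\ kp hSD g = b.
Proof. intro E. subst g. pose proof (hp_kp hSD (proj1_sig a ** proj1_sig b)) as E2.
  destruct (dec_uniq hSD (proj2_sig a) (proj2_sig b) (proj2_sig (hp hSD _)) (proj2_sig (kp hSD _)) E2).
  split; apply elt_eq; auto. Qed.

Definition e1 {G : Group} (S : subgroup G) : elt S := exist _ gone (smem1 S).

Lemma dec_K {G : Group} {H K : subgroup G} (hSD : semidirect H K) (k : elt K) :
  hp hSD (proj1_sig k) = e1 H /\ kp hSD (proj1_sig k) = k.
Proof. apply dec_eq. simpl. rewrite gmul1l. reflexivity. Qed.
Lemma dec_H {G : Group} {H K : subgroup G} (hSD : semidirect H K) (h : elt H) :
  hp hSD (proj1_sig h) = h /\ kp hSD (proj1_sig h) = e1 K.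
Proof. apply dec_eq. simpl. rewrite gmul1r. reflexivity. Qed.
Lemma kpK {G : Group} {H K : subgroup G} (hSD : semidirect H K) (x : G) :
  smem K x -> proj1_sig (kp hSD x) = x.
Proof. intro kx. exact (f_equal (@proj1_sig _ _) (proj2 (dec_K hSD (exist _ x kx)))). Qed.

Definition Phi {G : Group} {H K : subgroup G} (hSD : semidirect H K) (th : G -> G) : mat H K :=
  Mat (fun h => hp hSD (th (proj1_sig h))) (fun h => kp hSD (th (proj1_sig h)))
      (fun k => kp hSD (th (proj1_sig k))).

Lemma aut_one {G : Group} {K : subgroup G} {th : G -> G} : AutK K th -> th gone = gone.
Proof. intros [Hm _]. pose proof (Hm gone gone) as E. rewrite gmul1l in E.
  symmetry. apply (mul_cancel_l (th gone)). rewrite gmul1r. exact E. Qed.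
Lemma aut_inv {G : Group} {K : subgroup G} {th : G -> G} : AutK K th -> forall x, th (ginv x) = ginv (th x).
Proof. intros A x. pose proof (aut_one A) as O. destruct A as [Hm _]. apply inv_unique.
  rewrite <- Hm, gmulVr. exact O. Qed.

Lemma theta_hk {G : Group} {H K : subgroup G} (hSD : semidirect H K) {th : G -> G} (A : AutK K th)
  (a : elt H) (b : elt K) :
  hp hSD (th (proj1_sig a ** proj1_sig b)) = hp hSD (th (proj1_sig a)) /\
  proj1_sig (kp hSD (th (proj1_sig a ** proj1_sig b))) = proj1_sig (kp hSD (th (proj1_sig a))) ** th (proj1_sig b).
Proof.
  destruct A as [Hm [_ [HK _]]].
  assert (M : smem K (proj1_sig (kp hSD (th (proj1_sig a))) ** th (proj1_sig b))).
  { apply smemM. apply proj2_sig. apply HK, proj2_sig. }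
  destruct (dec_eq hSD (hp hSD (th (proj1_sig a))) (exist _ _ M) (th (proj1_sig a ** proj1_sig b))) as [E1 E2].
  { simpl. rewrite Hm, (hp_kp hSD (th (proj1_sig a))) at 1. rewrite mulA'. reflexivity. }
  rewrite E1, E2. simpl. split; reflexivity.
Qed.

Lemma hom_H {G : Group} {H K : subgroup G} (hSD : semidirect H K) {th : G -> G} (A : AutK K th)
  (a b : elt H) :
  proj1_sig (hp hSD (th (proj1_sig a ** proj1_sig b))) =
     proj1_sig (hp hSD (th (proj1_sig a))) ** gconj (proj1_sig (hp hSD (th (proj1_sig b)))) (proj1_sig (kp hSD (th (proj1_sig a)))) /\
  proj1_sig (kp hSD (th (proj1_sig a ** proj1_sig b))) =
     proj1_sig (kp hSD (th (proj1_sig a))) ** proj1_sig (kp hSD (th (proj1_sig b))).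
Proof.
  destruct A as [Hm [_ [HK _]]].
  assert (MH : smem H (proj1_sig (hp hSD (th (proj1_sig a))) ** gconj (proj1_sig (hp hSD (th (proj1_sig b)))) (proj1_sig (kp hSD (th (proj1_sig a)))))).
  { apply smemM. apply proj2_sig. apply (proj1 hSD). apply proj2_sig. }
  assert (MK : smem K (proj1_sig (kp hSD (th (proj1_sig a))) ** proj1_sig (kp hSD (th (proj1_sig b))))).
  { apply smemM; apply proj2_sig. }
  destruct (dec_eq hSD (exist _ _ MH) (exist _ _ MK) (th (proj1_sig a ** proj1_sig b))) as [E1 E2].
  { simpl. rewrite Hm.
    transitivity ((proj1_sig (hp hSD (th (proj1_sig a))) ** proj1_sig (kp hSD (th (proj1_sig a)))) **
                  (proj1_sig (hp hSD (th (proj1_sig b))) ** proj1_sig (kp hSD (th (proj1_sig b))))).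
    - f_equal; apply hp_kp.
    - gsimpl. reflexivity. }
  rewrite E1, E2. simpl. split; reflexivity.
Qed.

Lemma conj_K {G : Group} {H K : subgroup G} (hSD : semidirect H K) {th : G -> G} (A : AutK K th)
  (h : elt H) (k : elt K) :
  proj1_sig (hp hSD (th (gconj (proj1_sig h) (proj1_sig k)))) =
     gconj (proj1_sig (hp hSD (th (proj1_sig h)))) (th (proj1_sig k)) /\
  proj1_sig (kp hSD (th (gconj (proj1_sig h) (proj1_sig k)))) =
     gconj (proj1_sig (kp hSD (th (proj1_sig h)))) (th (proj1_sig k)).
Proof.
  pose proof (aut_inv A) as Hi.
  destruct A as [Hm [_ [HK _]]].
  assert (MH : smem H (gconj (proj1_sig (hp hSD (th (proj1_sig h)))) (th (proj1_sig k)))).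
  { apply (proj1 hSD). apply proj2_sig. }
  assert (MK : smem K (gconj (proj1_sig (kp hSD (th (proj1_sig h)))) (th (proj1_sig k)))).
  { assert (kk := HK _ (proj2_sig k)). unfold gconj. apply smemM; auto. apply smemM. apply proj2_sig. apply smemV; auto. }
  destruct (dec_eq hSD (exist _ _ MH) (exist _ _ MK) (th (gconj (proj1_sig h) (proj1_sig k)))) as [E1 E2].
  { simpl. unfold gconj at 1. rewrite !Hm, Hi, (hp_kp hSD (th (proj1_sig h))) at 1. gsimpl. reflexivity. }
  rewrite E1, E2. simpl. split; reflexivity.
Qed.

Lemma PhiA {G : Group} {H K : subgroup G} (hSD : semidirect H K) (th : G -> G) (A : AutK K th) :
  inMK (Phi hSD th) /\
  (forall h : elt H, th (proj1_sig h) =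
      gmul (proj1_sig (ma (Phi hSD th) h)) (proj1_sig (mg (Phi hSD th) h))) /\
  (forall k : elt K, proj1_sig (md (Phi hSD th) k) = th (proj1_sig k)).
Proof.
  pose proof A as A'. destruct A' as [Hm [[Hinj Hsurj] [HK HKs]]].
  assert (D : forall k : elt K, proj1_sig (kp hSD (th (proj1_sig k))) = th (proj1_sig k)).
  { intro k. apply kpK. apply HK, proj2_sig. }
  split; [|split]; simpl; [| intro h; apply hp_kp | exact D].
  split; [|split; [|split; [|split; [|split; [|split]]]]]; simpl.
  - intros a b. apply elt_eq. simpl. apply (proj2 (hom_H hSD A a b)).
  - intros a b. apply elt_eq. simpl. rewrite (kpK hSD _ (HK _ (smemM (proj2_sig a) (proj2_sig b)))), !D. apply Hm.
  - split.
    + intros a b E. apply elt_eq. apply Hinj. rewrite <- (D a), <- (D b), E. reflexivity.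
    + intro y. destruct (HKs (proj1_sig y) (proj2_sig y)) as [x [kx E]].
      exists (exist _ x kx). apply elt_eq. rewrite D. exact E.
  - intros h h'. apply (proj1 (hom_H hSD A h h')).
  - intros h k hk E. rewrite E, D. apply (proj2 (conj_K hSD A h k)).
  - intros h k hk E. rewrite E, D. apply (proj1 (conj_K hSD A h k)).
  - intros h' k'.
    destruct (Hsurj (proj1_sig h' ** proj1_sig k')) as [g Eg].
    exists (hp hSD g, kp hSD g). simpl.
    destruct (theta_hk hSD A (hp hSD g) (kp hSD g)) as [T1 T2].
    rewrite <- (hp_kp hSD g) in T1, T2.
    assert (Eg' : th g = proj1_sig (hp hSD (th (proj1_sig (hp hSD g)))) ** (proj1_sig (kp hSD (th (proj1_sig (hp hSD g)))) ** th (proj1_sig (kp hSD g)))).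
    { rewrite <- T2, <- T1. apply hp_kp. }
    rewrite Eg in Eg'.
    destruct (dec_uniq hSD (proj2_sig h') (proj2_sig k') (proj2_sig _) 
       (smemM (proj2_sig (kp hSD (th (proj1_sig (hp hSD g))))) (HK _ (proj2_sig (kp hSD g)))) Eg') as [F1 F2].
    split.
    + split.
      * apply elt_eq. symmetry. exact F1.
      * apply elt_eq. simpl. rewrite D. symmetry. exact F2.
    + intros [a b] [P1 P2]. simpl in P1, P2.
      assert (Q : th (proj1_sig a ** proj1_sig b) = th g).
      { rewrite Eg, Hm, (hp_kp hSD (th (proj1_sig a))), P1. rewrite mulA'. f_equal.
        rewrite <- P2. simpl. rewrite D. reflexivity. }
      apply Hinj in Q. symmetry in Q. destruct (dec_eq hSD a b g Q) as [R1 R2]. rewrite R1, R2. reflexivity.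
Qed.

Lemma PhiComp {G : Group} {H K : subgroup G} (hSD : semidirect H K) {th th' : G -> G}
  (A : AutK K th) (A' : AutK K th') :
  Phi hSD (fun x => th (th' x)) = mmul (Phi hSD th) (Phi hSD th').
Proof.
  unfold Phi, mmul; simpl. f_equal; apply functional_extensionality; intro h.
  - rewrite (hp_kp hSD (th' (proj1_sig h))) at 1. apply (proj1 (theta_hk hSD A _ _)).
  - apply elt_eq. rewrite (hp_kp hSD (th' (proj1_sig h))) at 1. rewrite (proj2 (theta_hk hSD A _ _)).
    simpl. f_equal. symmetry. apply kpK. apply (proj1 (proj2 (proj2 A))), proj2_sig.
  - rewrite (kpK hSD). reflexivity. apply (proj1 (proj2 (proj2 A'))), proj2_sig.
Qed.

Lemma PhiInj {G : Group} {H K : subgroup G} (hSD : semidirect H K) {th th' : G -> G}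
  (A : AutK K th) (A' : AutK K th') : Phi hSD th = Phi hSD th' -> forall x, th x = th' x.
Proof.
  intros E x. unfold Phi in E. injection E as E1 E2 E3.
  rewrite (hp_kp hSD x), (proj1 A), (proj1 A').
  rewrite (hp_kp hSD (th (proj1_sig (hp hSD x)))), (hp_kp hSD (th' (proj1_sig (hp hSD x)))).
  rewrite <- (kpK hSD (th (proj1_sig (kp hSD x)))), <- (kpK hSD (th' (proj1_sig (kp hSD x)))).
  - rewrite (equal_f E1 (hp hSD x)), (equal_f E2 (hp hSD x)), (equal_f E3 (kp hSD x)). reflexivity.
  - apply (proj1 (proj2 (proj2 A'))), proj2_sig.
  - apply (proj1 (proj2 (proj2 A))), proj2_sig.
Qed.

Lemma idem_one {G : Group} (x : G) : x = x ** x -> x = gone.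
Proof. intro E. symmetry. apply (mul_cancel_l x). rewrite gmul1r. exact E. Qed.

Lemma v_smul {G : Group} {S : subgroup G} (a b : elt S) : proj1_sig (smul a b) = proj1_sig a ** proj1_sig b.
Proof. reflexivity. Qed.

Lemma smul11 {G : Group} (S : subgroup G) : smul (e1 S) (e1 S) = e1 S.
Proof. apply elt_eq. simpl. apply gmul1l. Qed.

Definition thm {G : Group} {H K : subgroup G} (hSD : semidirect H K) (m : mat H K) (g : G) : G :=
  proj1_sig (ma m (hp hSD g)) ** proj1_sig (mg m (hp hSD g)) ** proj1_sig (md m (kp hSD g)).

Lemma PhiSurj {G : Group} {H K : subgroup G} (hSD : semidirect H K) (m : mat H K) :
  inMK m -> exists th, AutK K th /\ Phi hSD th = m.
Proof.
  destruct m as [al ga de]. intros [Ghom [Dhom [[Dinj Dsurj] [C1 [C2 [C3 C4]]]]]]. simpl in *.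
  assert (d1 : de (e1 K) = e1 K).
  { apply elt_eq. apply idem_one. rewrite <- v_smul, <- Dhom, smul11. reflexivity. }
  assert (g1 : ga (e1 H) = e1 K).
  { apply elt_eq. apply idem_one. rewrite <- v_smul, <- Ghom, smul11. reflexivity. }
  assert (a1 : proj1_sig (al (e1 H)) = gone).
  { apply idem_one. pose proof (C1 (e1 H) (e1 H)) as E. rewrite smul11, g1 in E. simpl in E.
    rewrite E at 1. gsimpl. reflexivity. }
  pose (th := thm hSD (Mat al ga de)).
  assert (thHK : forall h k, th (proj1_sig h ** proj1_sig k) =
            proj1_sig (al h) ** proj1_sig (ga h) ** proj1_sig (de k)).
  { intros h k. destruct (dec_eq hSD h k _ eq_refl) as [E1 E2]. unfold th, thm; simpl.
    rewrite E1, E2. reflexivity. }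
  assert (thH : forall h, th (proj1_sig h) = proj1_sig (al h) ** proj1_sig (ga h)).
  { intro h. rewrite <- (gmul1r (proj1_sig h)). change gone with (proj1_sig (e1 K)).
    rewrite thHK, d1. simpl. apply gmul1r. }
  assert (thK : forall k, th (proj1_sig k) = proj1_sig (de k)).
  { intro k. rewrite <- (gmul1l (proj1_sig k)). change gone with (proj1_sig (e1 H)).
    rewrite thHK, g1, a1. simpl. rewrite !gmul1l. reflexivity. }
  assert (thD : forall x, th x = th (proj1_sig (hp hSD x) ** proj1_sig (kp hSD x))).
  { intro x. rewrite <- hp_kp. reflexivity. }
  assert (Hm0 : forall (h h' : elt H) (k k' : elt K), th (proj1_sig h ** proj1_sig k ** (proj1_sig h' ** proj1_sig k')) =
              th (proj1_sig h ** proj1_sig k) ** th (proj1_sig h' ** proj1_sig k')).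
  { intros h h' k k'.
    pose (hk' := exist (smem H) (gconj (proj1_sig h') (proj1_sig k)) (proj1 hSD _ _ (proj2_sig h'))).
    assert (E : proj1_sig h ** proj1_sig k ** (proj1_sig h' ** proj1_sig k') =
                proj1_sig (smul h hk') ** proj1_sig (smul k k')).
    { rewrite !v_smul. unfold hk'. simpl. gsimpl. reflexivity. }
    rewrite E, !thHK.
    rewrite (C1 h hk'), Ghom, Dhom, !v_smul, (C3 h' k hk' eq_refl), (C2 h' k hk' eq_refl).
    gsimpl. reflexivity. }
  assert (Hm : forall x y, th (x ** y) = th x ** th y).
  { intros x y. rewrite (hp_kp hSD x), (hp_kp hSD y). apply Hm0. }
  exists th. split.
  - split; [exact Hm|]. split; [split|split].
    + intros x y E. rewrite thD, (thD y) in E. rewrite !thHK in E.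
      rewrite !mulA' in E.
      destruct (dec_uniq hSD (proj2_sig (al (hp hSD x))) (smemM (proj2_sig (ga (hp hSD x))) (proj2_sig (de (kp hSD x))))
                 (proj2_sig (al (hp hSD y))) (smemM (proj2_sig (ga (hp hSD y))) (proj2_sig (de (kp hSD y)))) E) as [F1 F2].
      destruct (C4 (al (hp hSD x)) (smul (ga (hp hSD x)) (de (kp hSD x)))) as [p [_ U]].
      assert (P1 := U (hp hSD x, kp hSD x) (conj eq_refl eq_refl)).
      assert (P2 : p = (hp hSD y, kp hSD y)).
      { apply U. simpl. split; apply elt_eq; simpl; symmetry; assumption. }
      rewrite P1 in P2. injection P2 as Q1 Q2.
      rewrite (hp_kp hSD x), (hp_kp hSD y), Q1, Q2. reflexivity.
    + intro y. destruct (C4 (hp hSD y) (kp hSD y)) as [[h k] [[P1 P2] _]]. simpl in P1, P2.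
      exists (proj1_sig h ** proj1_sig k). rewrite thHK, mulA', <- v_smul, P2, P1. symmetry. apply hp_kp.
    + intros x kx. change x with (proj1_sig (exist (smem K) x kx)). rewrite thK. apply proj2_sig.
    + intros y ky. destruct (Dsurj (exist _ y ky)) as [k Ek]. exists (proj1_sig k). split.
      apply proj2_sig. rewrite thK, Ek. reflexivity.
  - unfold Phi. f_equal; apply functional_extensionality; intro h.
    + rewrite thH. apply (proj1 (dec_eq hSD _ _ _ eq_refl)).
    + rewrite thH. apply (proj2 (dec_eq hSD _ _ _ eq_refl)).
    + rewrite thK. apply (proj2 (dec_K hSD (de h))).
Qed.

Lemma aut_comp {G : Group} {K : subgroup G} {th th' : G -> G} :
  AutK K th -> AutK K th' -> AutK K (fun x => th (th' x)).
Proof.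
  intros [Hm [[Hi Hs] [HK HKs]]] [Hm' [[Hi' Hs'] [HK' HKs']]].
  split; [|split; [split|split]].
  - intros x y. rewrite Hm', Hm. reflexivity.
  - intros x y E. apply Hi', Hi, E.
  - intro y. destruct (Hs y) as [z Ez]. destruct (Hs' z) as [x Ex]. exists x. rewrite Ex. exact Ez.
  - intros x kx. apply HK, HK', kx.
  - intros y ky. destruct (HKs y ky) as [z [kz Ez]]. destruct (HKs' z kz) as [x [kx Ex]].
    exists x. split; [exact kx|]. rewrite Ex. exact Ez.
Qed.

Lemma aut_id {G : Group} (K : subgroup G) : AutK K (fun x => x).
Proof.
  split; [|split; [split|split]]; auto.
  - intro y. exists y. reflexivity.
  - intros y ky. exists y. auto.
Qed.

Lemma aut_invex {G : Group} {K : subgroup G} {th : G -> G} :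
  AutK K th -> exists thi, AutK K thi /\ (forall x, th (thi x) = x) /\ (forall x, thi (th x) = x).
Proof.
  intros [Hm [[Hi Hs] [HK HKs]]].
  pose (thi := fun y => proj1_sig (constructive_indefinite_description _ (Hs y))).
  assert (R : forall y, th (thi y) = y).
  { intro y. unfold thi. destruct (constructive_indefinite_description _ _). simpl. exact e. }
  assert (L : forall x, thi (th x) = x).
  { intro x. apply Hi. apply R. }
  exists thi. split; [|split; assumption].
  split; [|split; [split|split]].
  - intros x y. apply Hi. rewrite Hm, !R. reflexivity.
  - intros x y E. rewrite <- (R x), <- (R y), E. reflexivity.
  - intro y. exists (th y). apply L.
  - intros y ky. destruct (HKs y ky) as [x [kx Ex]]. rewrite <- Ex, L. exact kx.
  - intros y ky. exists (th y). split; [apply HK, ky | apply L].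
Qed.

Theorem mainTheorem1 (G : Group) (H K : subgroup G) (hSD : semidirect H K) :
  (* \hat M_K is a group under mmul *)
  ((forall m m' : mat H K, inMK m -> inMK m' -> inMK (mmul m m')) /\
   (forall m1 m2 m3 : mat H K, inMK m1 -> inMK m2 -> inMK m3 ->
      mmul m1 (mmul m2 m3) = mmul (mmul m1 m2) m3) /\
   (exists e : mat H K, inMK e /\
      (forall m, inMK m -> mmul e m = m /\ mmul m e = m) /\
      (forall m, inMK m -> exists m', inMK m' /\ mmul m m' = e /\ mmul m' m = e))) /\
  (* Aut_K(G) is isomorphic to \hat M_K via theta |-> [alpha 0; gamma delta] *)
  (exists Phi : (G -> G) -> mat H K,
     (forall theta, AutK K theta ->
        inMK (Phi theta) /\
        (forall h : elt H,
           theta (proj1_sig h) =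
           gmul (proj1_sig (ma (Phi theta) h)) (proj1_sig (mg (Phi theta) h))) /\
        (forall k : elt K, proj1_sig (md (Phi theta) k) = theta (proj1_sig k))) /\
     (forall theta theta', AutK K theta -> AutK K theta' ->
        Phi (fun x => theta (theta' x)) = mmul (Phi theta) (Phi theta')) /\
     (forall theta theta', AutK K theta -> AutK K theta' ->
        Phi theta = Phi theta' -> forall x, theta x = theta' x) /\
     (forall m, inMK m -> exists theta, AutK K theta /\ Phi theta = m)).
Proof.
  split.
  - split; [|split].
    + intros m m' I I'. destruct (PhiSurj hSD _ I) as [th [A E]]. destruct (PhiSurj hSD _ I') as [th' [A' E']].
      subst. rewrite <- (PhiComp hSD A A'). apply (PhiA hSD _ (aut_comp A A')).
    + intros m1 m2 m3 I1 I2 I3.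
      destruct (PhiSurj hSD _ I1) as [t1 [A1 E1]]. destruct (PhiSurj hSD _ I2) as [t2 [A2 E2]].
      destruct (PhiSurj hSD _ I3) as [t3 [A3 E3]]. subst.
      rewrite <- (PhiComp hSD A2 A3), <- (PhiComp hSD A1 (aut_comp A2 A3)),
              <- (PhiComp hSD A1 A2), <- (PhiComp hSD (aut_comp A1 A2) A3). reflexivity.
    + exists (Phi hSD (fun x => x)). split; [apply (PhiA hSD _ (aut_id K))|split].
      * intros m I. destruct (PhiSurj hSD _ I) as [th [A E]]. subst.
        rewrite <- (PhiComp hSD (aut_id K) A), <- (PhiComp hSD A (aut_id K)). split; reflexivity.
      * intros m I. destruct (PhiSurj hSD _ I) as [th [A E]]. subst.
        destruct (aut_invex A) as [thi [Ai [R L]]].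
        exists (Phi hSD thi). split; [apply (PhiA hSD _ Ai)|].
        rewrite <- (PhiComp hSD A Ai), <- (PhiComp hSD Ai A). split; f_equal;
          apply functional_extensionality; auto.
  - exists (Phi hSD). split; [|split; [|split]].
    + intros th A. apply (PhiA hSD _ A).
    + intros th th' A A'. apply (PhiComp hSD A A').
    + intros th th' A A'. apply (PhiInj hSD A A').
    + intros m I. apply (PhiSurj hSD _ I).
Qed.
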